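(* Let $G$ be a connected bipartite graph with at least $3$ vertices. Then \[ \mathcal{H}_G=[1,\infty),\qquad [2,\infty)\subset\mathcal{H}^\phi_G\subset[1,\infty),\qquad \{1\}\cup[3,\infty)\subset\mathcal{H}^\psi_G\subset[1,\infty). \] If moreover $K_{2,2}\subset G\subset K_{2,m}$ for some $m\ge2$, then $\mathcal{H}^\phi_G=[2,\infty)$ and $\{1\}\cup[2,\infty)\subset\mathcal{H}^\psi_G\subset[1,\infty)$.
   Context: Graphs are finite and simple; $K_{a,b}$ is the complete bipartite graph, and $\subset$ between graphs means subgraph containment (up to isomorphism). For a graph $G$ on $\{1,\dots,n\}$ and $I\subset\mathbb{R}$, $\mathcal{P}_G(I)$ is the set of real symmetric PSD $n\times n$ matrices with entries in $I$ and $a_{ij}=0$ whenever $i\ne j$ and $(i,j)$ is not an edge; $\mathcal{P}_G=\mathcal{P}_G(\mathbb{R})$. $A^{\circ\alpha}=(a_{ij}^\alpha)$ with $0^\alpha:=0$; $\psi_\alpha(x)=\mathrm{sgn}(x)|x|^\alpha$, $\phi_\alpha(x)=|x|^\alpha$ ($x\ne0$), $\psi_\alpha(0)=\phi_\alpha(0)=0$, applied entrywise. $\mathcal{H}_G=\{\alpha\in\mathbb{R}:A^{\circ\alpha}\in\mathcal{P}_G\ \forall A\in\mathcal{P}_G([0,\infty))\}$, $\mathcal{H}_G^\psi=\{\alpha:\psi_\alpha[A]\in\mathcal{P}_G\ \forall A\in\mathcal{P}_G(\mathbb{R})\}$, $\mathcal{H}_G^\phi=\{\alpha:\phi_\alpha[A]\in\mathcal{P}_G\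 \forall A\in\mathcal{P}_G(\mathbb{R})\}$. *)

(* Defs.v *)
From HB Require Import structures.
From mathcomp Require Import all_boot all_order all_algebra.
From mathcomp Require Import all_classical all_reals.
From mathcomp Require Import exp.
Set Implicit Arguments. Unset Strict Implicit. Unset Printing Implicit Defensive.
Import Order.TTheory GRing.Theory Num.Theory.
Local Open Scope ring_scope.
Local Open Scope classical_set_scope.

Definition simple_graph (T : finType) (e : rel T) : Prop :=
  symmetric e /\ irreflexive e.

Definition connected_graph (T : finType) (e : rel T) : Prop :=
  forall x y, connect e x y.

Definition bipartite_graph (T : finType) (e : rel T) : Prop :=
  exists s : T -> bool, forall x y, e x y -> s x != s y.

Definition subgraph (T1 T2 : finType) (e1 : rel T1) (e2 : rel T2) : Prop :=
  exists f : T1 -> T2, injective f /\ forall x y, e1 x y -> e2 (f x) (f y).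

Definition Kab (a b : nat) : rel ('I_a + 'I_b)%type :=
  fun x y => match x, y with
             | inl _, inr _ => true
             | inr _, inl _ => true
             | _, _ => false
             end.

Definition psd (R : realType) (n : nat) (A : 'M[R]_n) : Prop :=
  A^T = A /\ forall v : 'cV[R]_n, 0 <= (v^T *m A *m v) 0 0.

Definition PG (R : realType) (n : nat) (e : rel 'I_n) (I : set R)
    (A : 'M[R]_n) : Prop :=
  psd A /\ (forall i j, I (A i j)) /\
  (forall i j, i != j -> ~~ e i j -> A i j = 0).

Definition epow (R : realType) (alpha : R) (x : R) : R :=
  if x == 0 then 0 else powR x alpha.

Definition phi_pow (R : realType) (alpha : R) (x : R) : R :=
  if x == 0 then 0 else powR `|x| alpha.

Definition psi_pow (R : realType) (alpha : R) (x : R) : R :=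
  if x == 0 then 0 else Num.sg x * powR `|x| alpha.

Definition HG (R : realType) (n : nat) (e : rel 'I_n) : set R :=
  [set alpha | forall A : 'M[R]_n, PG e [set x | 0 <= x] A ->
                 PG e setT (map_mx (epow alpha) A)].

Definition HG_psi (R : realType) (n : nat) (e : rel 'I_n) : set R :=
  [set alpha | forall A : 'M[R]_n, PG e setT A ->
                 PG e setT (map_mx (psi_pow alpha) A)].

Definition HG_phi (R : realType) (n : nat) (e : rel 'I_n) : set R :=
  [set alpha | forall A : 'M[R]_n, PG e setT A ->
                 PG e setT (map_mx (phi_pow alpha) A)].
Arguments Kab a%_N b%_N : clear implicits.

(* Main.v *)
Require Import Defs.
From HB Require Import structures.
From mathcomp Require Import all_boot all_order all_algebra.
From mathcomp Require Import all_classical all_reals.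
From mathcomp Require Import exp.
Set Implicit Arguments. Unset Strict Implicit. Unset Printing Implicit Defensive.
Import Order.TTheory GRing.Theory Num.Theory.
Local Open Scope ring_scope.
Local Open Scope classical_set_scope.
From mathcomp Require Import ring lra.

Definition qf (R : realType) n (A : 'M[R]_n) (w : 'I_n -> R) :=
  \sum_i \sum_j w i * A i j * w j.

Lemma qf_mx (R : realType) n (A : 'M[R]_n) (v : 'cV[R]_n) :
  (v^T *m A *m v) 0 0 = qf A (fun i => v i 0).
Proof.
rewrite mxE /qf; under eq_bigr do rewrite mxE big_distrl /=.
rewrite exchange_big; apply: eq_bigr => i _; apply: eq_bigr => j _.
by rewrite !mxE.
Qed.

Lemma psd_qf (R : realType) n (A : 'M[R]_n) :
  psd A <-> A^T = A /\ forall w, 0 <= qf A w.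
Proof.
split => [[hs hq]|[hs hq]]; split => //.
  move=> w; have := hq (\col_i w i); rewrite qf_mx.
  by congr (0 <= _); apply: eq_bigr => i _; apply: eq_bigr => j _; rewrite !mxE.
by move=> v; rewrite qf_mx.
Qed.


Lemma sum_ind1 (R : realType) (T : finType) (x : T) (F : T -> R) :
  \sum_i (x == i)%:R * F i = F x.
Proof.
rewrite (bigD1 x) //= eqxx mul1r big1 ?addr0 // => i /negbTE.
by rewrite eq_sym => ->; rewrite mul0r.
Qed.

Lemma sum_img (R : realType) (T T' : finType) (p : T -> T') (F : T' -> R) :
  injective p -> (forall i, (forall a, p a != i) -> F i = 0) ->
  \sum_i F i = \sum_a F (p a).
Proof.
move=> pinj H.
transitivity (\sum_a \sum_i (p a == i)%:R * F i); last first.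
  by apply: eq_bigr => a _; rewrite sum_ind1.
rewrite exchange_big; apply: eq_bigr => i _.
case: (pickP (fun a => p a == i)) => [a /eqP Ha|Hn].
  rewrite (bigD1 a) //= Ha eqxx mul1r big1 ?addr0 // => b nb.
  by rewrite -Ha (inj_eq pinj) (negbTE nb) mul0r.
rewrite H ?big1 // => [b _|a]; first by rewrite mulr0.
by rewrite Hn.
Qed.

Lemma qf_supp (R : realType) n k (A : 'M[R]_n) (w : 'I_n -> R) (p : 'I_k -> 'I_n) :
  injective p -> (forall i, (forall a, p a != i) -> w i = 0) ->
  qf A w = \sum_a \sum_b w (p a) * A (p a) (p b) * w (p b).
Proof.
move=> pinj H; rewrite /qf (@sum_img _ _ _ p (fun i => \sum_j w i * A i j * w j)) //.
  apply: eq_bigr => a _; rewrite (@sum_img _ _ _ p (fun j => w (p a) * A (p a) j * w j)) //.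
  by move=> j /H ->; rewrite mulr0.
by move=> i /H ->; rewrite big1 // => j _; rewrite !mul0r.
Qed.


Lemma quad2 (R : realType) (a b c : R) :
  (forall x y, 0 <= x*x*a + 2*x*y*c + y*y*b) -> c^+2 <= a*b.
Proof.
move=> H; have a0 : 0 <= a by have := H 1 0; lra.
have b0 : 0 <= b by have := H 0 1; lra.
case: (ltrgt0P a) a0 => // [ap|az] _.
  have := H (-c) a.
  have -> : - c * - c * a + 2 * - c * a * c + a * a * b = a * (a * b - c^+2) by ring.
  by rewrite pmulr_rge0 // subr_ge0.
rewrite az mul0r; case: (eqVneq c 0) => [->|cn]; first by rewrite expr0n.
have := H (-(b+1)/(2*c)) 1.
have -> : - (b + 1) / (2 * c) * (- (b + 1) / (2 * c)) * a + 2 * (- (b + 1) / (2 * c)) * 1 * c + 1 * 1 * b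
  = -1.
  by rewrite az; field.
lra.
Qed.

Lemma psd_sym (R : realType) n (A : 'M[R]_n) i j : psd A -> A j i = A i j.
Proof. by case=> hs _; rewrite -[in RHS]hs mxE. Qed.

Lemma psd_diag (R : realType) n (A : 'M[R]_n) i : psd A -> 0 <= A i i.
Proof.
move=> /psd_qf [_ H]; have := H (fun k => (k == i)%:R).
rewrite (@qf_supp _ _ 1 _ _ (fun _ => i)); first last.
- by move=> k /(_ ord0); rewrite eq_sym => /negbTE ->.
- by move=> [[|a] ha] [[|b] hb] //= _; apply/val_inj.
by rewrite big_ord1 big_ord1 eqxx mul1r mulr1.
Qed.

Lemma psd_min2 (R : realType) n (A : 'M[R]_n) i j : psd A ->
  A i j ^+ 2 <= A i i * A j j.
Proof.
move=> hA; case: (eqVneq i j) => [->|ij]; first by rewrite expr2.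
have hs := psd_sym i j hA.
move: hA => /psd_qf [_ H]; apply: quad2 => x y.
have := H (fun k => x * (k == i)%:R + y * (k == j)%:R).
rewrite (@qf_supp _ _ 2 _ _ (fun a => if a == ord0 then i else j)); first last.
- move=> k /= Hk; have := Hk ord0; have := Hk (lift ord0 ord0) => /=.
  move=> Ha Hb; rewrite eq_sym in Ha; rewrite eq_sym in Hb.
  by rewrite (negbTE Ha) (negbTE Hb) !mulr0 addr0.
- move=> a b; case: (eqVneq a ord0) => [->|an]; case: (eqVneq b ord0) => [->|bn] //=.
  + by move/eqP; rewrite (negbTE ij).
  + by move/eqP; rewrite eq_sym (negbTE ij).
  + move=> _; apply/val_inj; move: a b an bn => [[|[|a]] ha] [[|[|b]] hb] //=.
rewrite !big_ord_recr !big_ord0 /= !add0r hs eqxx (negbTE ij) eq_sym (negbTE ij).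
rewrite eqxx !mulr1 !mulr0 !addr0 !add0r; lra.
Qed.


Lemma qf_split (R : realType) n (B : 'M[R]_n) w :
  qf B w = \sum_i B i i * w i ^+ 2 + \sum_i \sum_j (i != j)%:R * (w i * B i j * w j).
Proof.
rewrite /qf -big_split /=; apply: eq_bigr => i _.
rewrite (bigD1 i) //= [in RHS](bigD1 i) //= eqxx mul0r add0r expr2.
congr (_ + _); first by ring.
by apply: eq_bigr => j; rewrite eq_sym => ->; rewrite mul1r.
Qed.

Lemma row_bound (R : realType) n (A : 'M[R]_n) (s : 'I_n -> bool) i :
  psd A -> (forall i j, i != j -> s i = s j -> A i j = 0) ->
  \sum_j (i != j)%:R * (A i j ^+ 2 / A j j) <= A i i.
Proof.
move=> hA hpat.
pose v k := if k == i then 1 else - (A i k / A k k).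
have := (proj2 (proj1 (psd_qf A) hA)) v.
have -> : qf A v = \sum_k v k * \sum_l A k l * v l.
  by apply: eq_bigr => k _; rewrite big_distrr; apply: eq_bigr => l _; rewrite -mulrA.
rewrite (bigD1 i) //= [X in _ + X]big1 ?addr0; last first.
  move=> k ki; rewrite /v (negbTE ki).
  case: (eqVneq (A i k) 0) => [->|aik]; first by rewrite mul0r oppr0 mul0r.
  have akk : A k k != 0.
    apply: contraNneq aik => akk0; have := psd_min2 i k hA.
    by rewrite akk0 mulr0 => H; rewrite -sqrf_eq0 eq_le H sqr_ge0.
  suff -> : \sum_l A k l * v l = 0 by rewrite mulr0.
  rewrite (bigD1 i) //= /v eqxx mulr1 (bigD1 k) //=.
  rewrite (negbTE ki) big1 ?addr0.
    by rewrite (psd_sym k i hA) mulrN mulrCA mulfV // mulr1 subrr.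
  move=> l /andP [li lk]; rewrite (negbTE li).
  case: (eqVneq (A i l) 0) => [->|ail]; first by rewrite mul0r oppr0 mulr0.
  rewrite (hpat k l) ?mul0r // ?(eq_sym k) //.
  case: (boolP (s k == s i)) => [/eqP eki|nki].
    by move: aik; rewrite (hpat i k) ?eqxx // eq_sym.
  case: (boolP (s l == s i)) => [/eqP eli|nli].
    by move: ail; rewrite (hpat i l) ?eqxx // eq_sym.
  by move: nki nli; case: (s k); case: (s l); case: (s i).
rewrite /v eqxx mul1r (bigD1 i) //= eqxx mulr1.
set S1 := \sum_(j | _) _.
have -> : S1 = - \sum_j (i != j)%:R * (A i j ^+ 2 / A j j).
  rewrite /S1 [in RHS](bigD1 i) //= eqxx mul0r add0r -sumrN; apply: eq_bigr => j ji.
  by rewrite (negbTE ji) eq_sym ji mul1r mulrN expr2 mulrA.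
by rewrite subr_ge0.
Qed.


Lemma posL (R : realType) n (A B : 'M[R]_n) (s : 'I_n -> bool) (p : 'I_n -> R) :
  psd A -> (forall i j, i != j -> s i = s j -> A i j = 0) ->
  (forall i, B i i = A i i * p i ^+ 2) ->
  (forall i j, i != j -> `|B i j| <= A i j * (p i * p j)) ->
  forall w, 0 <= qf B w.
Proof.
move=> hA hpat hd ho w.
pose sg i : R := if s i then 1 else -1.
pose w' i := sg i * p i * `|w i|.
apply: le_trans ((proj2 (proj1 (psd_qf A) hA)) w') _.
rewrite !qf_split; apply: lerD.
  apply: ler_sum => i _; rewrite hd /w' !exprMn (real_normK (num_real _)).
  have -> : sg i ^+ 2 = 1 by rewrite /sg; case: (s i); rewrite ?expr1n ?sqrrN ?expr1n.
  by rewrite mul1r mulrA.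
apply: ler_sum => i _; apply: ler_sum => j _.
case: (eqVneq i j) => [->|ij]; first by rewrite !mul0r.
rewrite !mul1r; case: (boolP (s i == s j)) => [/eqP sij|nsij].
  have hb : B i j = 0.
    by apply/eqP; rewrite -normr_le0 (le_trans (ho i j ij)) // hpat // !mul0r.
  by rewrite (hpat i j ij sij) hb !mulr0 !mul0r.
have e : sg i * sg j = -1 by rewrite /sg; move: nsij; case: (s i); case: (s j) => //= _; ring.
have -> : w' i * A i j * w' j = (sg i * sg j) * (A i j * (p i * p j)) * (`|w i| * `|w j|).
  by rewrite /w'; ring.
rewrite e mulN1r mulNr; apply: le_trans (_ : - (`|B i j| * (`|w i| * `|w j|)) <= _).
  by rewrite lerN2 ler_wpM2r // ?mulr_ge0 // ho.
apply: lerNnormlW; rewrite !normrM le_eqVlt; apply/orP; left; apply/eqP; ring.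
Qed.

Lemma posG (R : realType) n (A B : 'M[R]_n) (s : 'I_n -> bool) (u : 'I_n -> R) :
  psd A -> (forall i j, i != j -> s i = s j -> A i j = 0) ->
  (forall i, B i i = u i ^+ 2) ->
  (forall i j, i != j -> `|B i j| <= A i j ^+ 2 / (A i i * A j j) * (u i * u j)) ->
  forall w, 0 <= qf B w.
Proof.
move=> hA hpat hd ho w.
pose c i j := A i j ^+ 2 / (A i i * A j j).
pose x i := u i * w i.
have c0 i j : 0 <= c i j.
  by rewrite /c divr_ge0 ?sqr_ge0 // mulr_ge0 // psd_diag.
have cs i j : c i j = c j i by rewrite /c (psd_sym i j hA) [A j j * _]mulrC.
have key i : \sum_j (i != j)%:R * c i j <= 1.
  have -> : \sum_j (i != j)%:R * c i j =
            (\sum_j (i != j)%:R * (A i j ^+ 2 / A j j)) / A i i.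
    rewrite big_distrl; apply: eq_bigr => j _ /=.
    by rewrite /c invfM; ring.
  have hrb := row_bound i hA hpat.
  case: (eqVneq (A i i) 0) => [->|ne]; first by rewrite invr0 mulr0.
  have pos : 0 < A i i by rewrite lt_neqAle eq_sym ne psd_diag.
  by rewrite ler_pdivrMr // mul1r.
rewrite qf_split.
have H1 : \sum_i B i i * w i ^+ 2 = \sum_i x i ^+ 2.
  by apply: eq_bigr => i _; rewrite hd /x exprMn.
have H2 : - (\sum_i \sum_j (i != j)%:R * (c i j * (`|x i| * `|x j|)))
     <= \sum_i \sum_j (i != j)%:R * (w i * B i j * w j).
  rewrite -sumrN; apply: ler_sum => i _; rewrite -sumrN; apply: ler_sum => j _.
  case: (eqVneq i j) => [->|ij]; first by rewrite !mul0r oppr0.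
  rewrite !mul1r; apply: lerNnormlW; rewrite /x !normrM.
  have hb : `|B i j| <= c i j * (`|u i| * `|u j|).
    apply: le_trans (ho i j ij) _; apply: ler_wpM2l; first exact: c0.
    by rewrite -normrM ler_norm.
  apply: le_trans (_ : `|w i| * (c i j * (`|u i| * `|u j|)) * `|w j| <= _).
    by apply: ler_wpM2r => //; apply: ler_wpM2l.
  rewrite le_eqVlt; apply/orP; left; apply/eqP; ring.
have H3 : \sum_i \sum_j (i != j)%:R * (c i j * (`|x i| * `|x j|)) <= \sum_i x i ^+ 2.
  pose d i j : R := (i != j)%:R * c i j.
  apply: le_trans (_ : \sum_i \sum_j d i j * ((x i ^+ 2 + x j ^+ 2) / 2) <= _).
    apply: ler_sum => i _; apply: ler_sum => j _; rewrite /d -mulrA.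
    apply: ler_wpM2l; first by case: (i != j).
    apply: ler_wpM2l => //.
    have := sqr_ge0 (`|x i| - `|x j|).
    rewrite -(real_normK (num_real (x i))) -(real_normK (num_real (x j))).
    by move=> h; rewrite ler_pdivlMr //; nra.
  have -> : \sum_i \sum_j d i j * ((x i ^+ 2 + x j ^+ 2) / 2) =
     (\sum_i \sum_j d i j * x i ^+ 2 + \sum_i \sum_j d i j * x j ^+ 2) / 2.
    rewrite -big_split big_distrl; apply: eq_bigr => i _ /=.
    rewrite -big_split big_distrl; apply: eq_bigr => j _ /=; ring.
  have -> : \sum_i \sum_j d i j * x j ^+ 2 = \sum_i \sum_j d i j * x i ^+ 2.
    rewrite exchange_big; apply: eq_bigr => i _; apply: eq_bigr => j _.
    by rewrite /d cs eq_sym.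
  have -> : forall y : R, (y + y) / 2 = y by move=> y; field.
  apply: ler_sum => i _.
  rewrite -big_distrl /= mulrC -[leRHS]mulr1 ler_wpM2l ?sqr_ge0 //.
  exact: key.
rewrite H1; lra.
Qed.


Lemma powR_sq (R : realType) (a z : R) : 0 <= a -> powR a (2 * z) = powR (a ^+ 2) z.
Proof. by move=> a0; rewrite powRrM powR_mulrn. Qed.

Lemma powR_half2 (R : realType) (d z : R) : 0 < d -> powR d (z / 2) ^+ 2 = powR d z.
Proof.
move=> d0; rewrite expr2 -powRD; last by rewrite implybE (gt_eqF d0) orbT.
by have -> : z / 2 + z / 2 = z by field.
Qed.

Lemma map_sym (R : realType) n (f : R -> R) (A : 'M[R]_n) :
  A^T = A -> (map_mx f A)^T = map_mx f A.
Proof. by move=> hs; apply/matrixP => i j; rewrite !mxE -[in RHS]hs mxE. Qed.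

Lemma HG_pos (R : realType) n (e : rel 'I_n) (s : 'I_n -> bool) (alpha : R) A :
  (forall x y, e x y -> s x != s y) -> 1 <= alpha ->
  PG e [set x | 0 <= x] A -> PG e setT (map_mx (epow alpha) A).
Proof.
move=> hs a1 [hA [hI hz]].
have hpat i j : i != j -> s i = s j -> A i j = 0.
  move=> ij sij; apply: hz => //; apply/negP => /hs; by rewrite sij eqxx.
split; last split => //; last first.
  by move=> i j ij nij; rewrite mxE hz // /epow eqxx.
apply/psd_qf; split; first by apply: map_sym; case: hA.
pose p i := powR (A i i) ((alpha - 1) / 2).
apply: (posL (p := p) hA hpat).
  move=> i; rewrite mxE /epow /p; case: eqVneq => [->|ne]; first by rewrite mul0r.
  have d0 : 0 < A i i by rewrite lt_neqAle eq_sym ne psd_diag.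
  by rewrite powR_half2 // mulr_powRB1 // ?(ltW d0) //; lra.
move=> i j ij; rewrite mxE /epow; case: eqVneq => [->|ne].
  by rewrite normr0 mul0r.
have a0 : 0 < A i j by rewrite lt_neqAle eq_sym ne; exact: hI.
have hm := psd_min2 i j hA.
have di := psd_diag i hA; have dj := psd_diag j hA.
rewrite ger0_norm ?powR_ge0 // /p -powRM // -mulr_powRB1 ?(ltW a0) //; last by lra.
apply: ler_wpM2l; first exact: ltW.
have -> : powR (A i j) (alpha - 1) = powR (A i j ^+ 2) ((alpha - 1) / 2).
  by rewrite -powR_sq ?(ltW a0) //; congr powR; field.
apply: ge0_ler_powR => //.
- by lra.
- by rewrite nnegrE sqr_ge0.
- by rewrite nnegrE mulr_ge0.
Qed.

Lemma core_ineq (R : realType) (X D beta : R) :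
  0 < X -> X <= D -> 1 <= beta -> powR X beta <= X / D * powR D beta.
Proof.
move=> X0 XD b1; have D0 : 0 < D by apply: lt_le_trans XD.
rewrite -(mulr_powRB1 (ltW X0)) ?(lt_le_trans _ b1) //.
rewrite -(mulr_powRB1 (ltW D0)) ?(lt_le_trans _ b1) //.
rewrite mulrA divfK ?gt_eqF //; apply: ler_wpM2l; first exact: ltW.
apply: ge0_ler_powR => //; first by lra.
- by rewrite nnegrE ltW.
- by rewrite nnegrE ltW.
Qed.

Lemma PG2_pos (R : realType) n (e : rel 'I_n) (s : 'I_n -> bool) (alpha : R)
  (f : R -> R) A :
  (forall x y, e x y -> s x != s y) -> 2 <= alpha ->
  f 0 = 0 -> (forall x, 0 < x -> f x = powR x alpha) ->
  (forall x, x != 0 -> `|f x| = powR `|x| alpha) ->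
  PG e setT A -> PG e setT (map_mx f A).
Proof.
move=> hs a2 f0 fpos fabs [hA [hI hz]].
have hpat i j : i != j -> s i = s j -> A i j = 0.
  move=> ij sij; apply: hz => //; apply/negP => /hs; by rewrite sij eqxx.
split; last split => //; last first.
  by move=> i j ij nij; rewrite mxE hz.
apply/psd_qf; split; first by apply: map_sym; case: hA.
pose u i := powR (A i i) (alpha / 2).
apply: (posG (u := u) hA hpat).
  move=> i; rewrite mxE /u; case: (eqVneq (A i i) 0) => [->|ne].
    by rewrite f0 powR0 ?expr0n //; apply/eqP => /eqP; lra.
  have d0 : 0 < A i i by rewrite lt_neqAle eq_sym ne psd_diag.
  by rewrite powR_half2 // fpos.
move=> i j ij; rewrite mxE; case: (eqVneq (A i j) 0) => [->|ne].
  by rewrite f0 normr0 expr0n /= !mul0r.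
have hm := psd_min2 i j hA.
have di := psd_diag i hA; have dj := psd_diag j hA.
rewrite fabs // /u -powRM //.
have -> : powR `|A i j| alpha = powR (`|A i j| ^+ 2) (alpha / 2).
  by rewrite -powR_sq ?normr_ge0 //; congr powR; field.
rewrite (real_normK (num_real _)).
apply: core_ineq => //; last by lra.
by rewrite lt_neqAle eq_sym sqrf_eq0 ne sqr_ge0.
Qed.


Definition liftm (R : realType) n k (p : 'I_k -> 'I_n) (M : 'I_k -> 'I_k -> R) : 'M[R]_n :=
  \matrix_(i, j) match [pick a | p a == i], [pick b | p b == j] with
                 | Some a, Some b => M a b | _, _ => 0 end.

Definition sqf (R : realType) k (M : 'I_k -> 'I_k -> R) (w : 'I_k -> R) :=
  \sum_a \sum_b w a * M a b * w b.

Lemma pick_p n k (p : 'I_k -> 'I_n) a : injective p -> [pick b | p b == p a] = Some a.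
Proof.
move=> pinj; case: pickP => [b /eqP /pinj -> //|H].
by have := H a; rewrite eqxx.
Qed.

Lemma liftm_pp (R : realType) n k (p : 'I_k -> 'I_n) (M : 'I_k -> 'I_k -> R) a b :
  injective p -> liftm p M (p a) (p b) = M a b :> R.
Proof. by move=> pinj; rewrite mxE !pick_p. Qed.

Lemma map_liftm (R : realType) n k (p : 'I_k -> 'I_n) (M : 'I_k -> 'I_k -> R) (f : R -> R) :
  f 0 = 0 -> map_mx f (liftm p M) = liftm p (fun a b => f (M a b)).
Proof.
move=> f0; apply/matrixP => i j; rewrite !mxE.
by case: (pickP (fun a => p a == i)) => [a _|_]; case: (pickP (fun b => p b == j)) => [b _|_].
Qed.

Lemma qf_liftm (R : realType) n k (p : 'I_k -> 'I_n) (M : 'I_k -> 'I_k -> R) w :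
  injective p -> qf (liftm p M) w = sqf M (fun a => w (p a)).
Proof.
move=> pinj; rewrite /qf /sqf.
rewrite (@sum_img _ _ _ p (fun i => \sum_j w i * liftm p M i j * w j)) //.
  apply: eq_bigr => a _.
  rewrite (@sum_img _ _ _ p (fun j => w (p a) * liftm p M (p a) j * w j)) //.
    by apply: eq_bigr => b _; rewrite liftm_pp.
  move=> j H; rewrite mxE pick_p //; case: (pickP (fun b => p b == j)) => [b /eqP hb|_]; last by rewrite mulr0 mul0r.
  by have := H b; rewrite hb eqxx.
move=> i H; rewrite big1 // => j _; rewrite mxE; case: (pickP (fun b => p b == i)) => [b /eqP hb|_].
  by have := H b; rewrite hb eqxx.
by rewrite mulr0 mul0r.
Qed.

Lemma psd_liftm (R : realType) n k (p : 'I_k -> 'I_n) (M : 'I_k -> 'I_k -> R) :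
  injective p -> (forall a b, M a b = M b a) -> (forall w, 0 <= sqf M w) ->
  psd (liftm p M).
Proof.
move=> pinj hs hq; apply/psd_qf; split; last by move=> w; rewrite qf_liftm.
apply/matrixP => i j; rewrite !mxE.
by case: (pickP (fun a => p a == i)) => [a _|_]; case: (pickP (fun b => p b == j)) => [b _|_].
Qed.

Lemma notpsd_liftm (R : realType) n k (p : 'I_k -> 'I_n) (M : 'I_k -> 'I_k -> R) w :
  injective p -> sqf M w < 0 -> ~ psd (liftm p M).
Proof.
move=> pinj hw /psd_qf [_ H].
pose v i := match [pick a | p a == i] with Some a => w a | None => 0 end.
have := H v; rewrite qf_liftm //.
have -> : (fun a => v (p a)) = w by apply: funext => a; rewrite /v pick_p.
by rewrite leNgt hw.
Qed.

Lemma pat_liftm (R : realType) n k (p : 'I_k -> 'I_n) (M : 'I_k -> 'I_k -> R) (e : rel 'I_n) :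
  (forall a b, a != b -> M a b != 0 -> e (p a) (p b)) ->
  forall i j, i != j -> ~~ e i j -> liftm p M i j = 0.
Proof.
move=> H i j ij nij; rewrite mxE.
case: (pickP (fun a => p a == i)) => [a /eqP ha|_] //; case: (pickP (fun b => p b == j)) => [b /eqP hb|_] //.
case: (eqVneq (M a b) 0) => // mab.
have ab : a != b by apply: contraNneq ij => hab; rewrite -ha -hb hab.
by have := H a b ab mab; rewrite ha hb (negbTE nij).
Qed.

Lemma nneg_liftm (R : realType) n k (p : 'I_k -> 'I_n) (M : 'I_k -> 'I_k -> R) :
  (forall a b, 0 <= M a b) -> forall i j, 0 <= liftm p M i j.
Proof.
move=> H i j; rewrite mxE.
by case: (pickP (fun a => p a == i)) => [a _|_] //; case: (pickP (fun b => p b == j)) => [b _|_].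
Qed.


Definition M3 (R : realType) : 'I_3 -> 'I_3 -> R := fun a b =>
  nth 0 (nth [::] [:: [:: 1; 1; 0]; [:: 1; 2; 1]; [:: 0; 1; 1]] a) b.

Lemma M3_sym (R : realType) a b : M3 R a b = M3 R b a.
Proof. by case: a => [[|[|[|a]]] ha]; case: b => [[|[|[|b]]] hb]. Qed.

Lemma M3_psd (R : realType) w : 0 <= sqf (M3 R) w.
Proof.
rewrite /sqf !big_ord_recr !big_ord0 /= /M3 /=.
set x := w _; set y := w _; set z := w _.
have h1 := sqr_ge0 (x + y); have h2 := sqr_ge0 (y + z); nra.
Qed.

Lemma M3_neg (R : realType) (f : R -> R) :
  f 0 = 0 -> f 1 = 1 -> 0 < f 2 < 2 ->
  sqf (fun a b => f (M3 R a b)) (fun a => if val a == 1%N then -2 else f 2) < 0.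
Proof.
move=> f0 f1 /andP [t0 t2].
rewrite /sqf !big_ord_recr !big_ord0 /= /M3 /= f0 f1.
set t := f 2 in t0 t2 *. nra.
Qed.

(* K22 matrix with r = sqrt 2 : order u1 u2 w1 w2 *)
Definition M4 (R : realType) : 'I_4 -> 'I_4 -> R := fun a b =>
  let r := Num.sqrt (2 : R) in
  nth 0 (nth [::] [:: [:: r; 0; 1; 1]; [:: 0; r; 1; -1]; [:: 1; 1; r; 0]; [:: 1; -1; 0; r]] a) b.

Lemma M4_sym (R : realType) a b : M4 R a b = M4 R b a.
Proof. by case: a => [[|[|[|[|a]]]] ha]; case: b => [[|[|[|[|b]]]] hb]. Qed.

Lemma M4_psd (R : realType) w : 0 <= sqf (M4 R) w.
Proof.
rewrite /sqf !big_ord_recr !big_ord0 /= /M4 /=.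
set x1 := w _; set x2 := w _; set y1 := w _; set y2 := w _.
set r := Num.sqrt 2.
have r2 : r ^+ 2 = 2 by rewrite sqr_sqrtr.
have r0 : 0 < r by rewrite sqrtr_gt0.
set Q := (X in 0 <= X).
have E : r * Q = (r * x1 + y1 + y2) ^+ 2 + (r * x2 + y1 - y2) ^+ 2 + (r ^+ 2 - 2) * (y1 ^+ 2 + y2 ^+ 2).
  rewrite /Q; ring.
rewrite r2 subrr mul0r addr0 in E.
have : 0 <= r * Q by rewrite E addr_ge0 ?sqr_ge0.
by rewrite pmulr_rge0.
Qed.

Lemma M4_neg (R : realType) (f : R -> R) :
  f 0 = 0 -> f 1 = 1 -> f (-1) = 1 -> f (Num.sqrt 2) < 2 ->
  sqf (fun a b => f (M4 R a b)) (fun a => if (val a < 2)%N then 1 else -1) < 0.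
Proof.
move=> f0 f1 fm1 ft.
rewrite /sqf !big_ord_recr !big_ord0 /= /M4 /= f0 f1 fm1.
set t := f _ in ft *. lra.
Qed.


Lemma nbr_exists n (e : rel 'I_n) x y : x != y -> connect e x y -> exists z, e x z.
Proof.
move=> xy /connectP [[|z p] /= hp hl]; first by rewrite hl eqxx in xy.
by exists z; case/andP: hp.
Qed.

Lemma P3_exists n (e : rel 'I_n) :
  simple_graph e -> connected_graph e -> (3 <= n)%N ->
  exists a b c, [/\ e a b, e b c & a != c].
Proof.
move=> [esym eirr] hc n3.
pose x0 : 'I_n := Ordinal (leq_trans (isT : (0 < 3)%N) n3).
pose x1 : 'I_n := Ordinal (leq_trans (isT : (1 < 3)%N) n3).
pose x2 : 'I_n := Ordinal (leq_trans (isT : (2 < 3)%N) n3).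
have [y ey] : exists y, e x0 y by apply: (@nbr_exists _ _ x0 x1) => //.
have x0y : x0 != y by apply: contraTneq ey => <-; rewrite eirr.
case: (pickP (fun z => e y z && (z != x0))) => [z /andP [eyz zx]|H1].
  by exists x0, y, z; split => //; rewrite eq_sym.
case: (pickP (fun z => e x0 z && (z != y))) => [z /andP [exz zy]|H2].
  by exists y, x0, z; split; [rewrite esym | | rewrite eq_sym].
pose S := [pred z | (z == x0) || (z == y)].
have clS : closed e S.
  have cs : connect_sym e by move=> u v; rewrite !hc.
  apply: (intro_closed cs) => u v euv; rewrite !inE => /orP [/eqP hu|/eqP hu]; subst u.
    by case: (eqVneq v y) => [->|vy]; rewrite ?eqxx ?orbT //; have := H2 v; rewrite euv vy.
  by case: (eqVneq v x0) => [->|vx]; rewrite ?eqxx //; have := H1 v; rewrite euv vx.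
have [z [zx zy]] : exists z, z != x0 /\ z != y.
  case: (eqVneq x1 y) => [x1y|x1y].
    by exists x2; rewrite -x1y; split; apply/eqP => /(congr1 val).
  by exists x1; split => //; apply/eqP => /(congr1 val).
have := closed_connect clS (hc x0 z); rewrite !inE eqxx /= (negbTE zx) (negbTE zy).
by [].
Qed.


Lemma cex_P3 (R : realType) n (e : rel 'I_n) a b c :
  simple_graph e -> e a b -> e b c -> a != c ->
  exists A : 'M[R]_n, PG e [set x | 0 <= x] A /\
    forall f : R -> R, f 0 = 0 -> f 1 = 1 -> 0 < f 2 < 2 -> ~ psd (map_mx f A).
Proof.
move=> [esym eirr] eab ebc ac.
have ab : a != b by apply: contraTneq eab => ->; rewrite eirr.
have bc : b != c by apply: contraTneq ebc => ->; rewrite eirr.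
pose p (x : 'I_3) := nth a [:: a; b; c] x.
have pinj : injective p.
{ move=> [[|[|[|x]]] hx] [[|[|[|y]]] hy] //= h; try by apply: val_inj.
  all: have ba : b != a by rewrite eq_sym.
  all: have cb : c != b by rewrite eq_sym.
  all: have ca : c != a by rewrite eq_sym.
  all: by move: h; rewrite /p /= => /eqP; rewrite ?(negbTE ba) ?(negbTE cb) ?(negbTE ca) ?(negbTE ab) ?(negbTE bc) ?(negbTE ac). }
exists (liftm p (M3 R)); split.
  split; first by apply: psd_liftm => //; [exact: M3_sym | exact: M3_psd].
  split; first by move=> i j; apply: nneg_liftm => x y; case: x => [[|[|[|x]]] hx]; case: y => [[|[|[|y]]] hy] //=; rewrite /M3 /= ?ler01 ?ler0n.
  apply: pat_liftm => x y.
  case: x => [[|[|[|x]]] hx]; case: y => [[|[|[|y]]] hy] //=; rewrite /M3 /= ?eqxx //.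
  1,2: by move=> _ _; rewrite /p /= esym.
move=> f f0 f1 ft; rewrite map_liftm //.
exact: (notpsd_liftm pinj (M3_neg f0 f1 ft)).
Qed.

Lemma cex_K22 (R : realType) n (e : rel 'I_n) :
  subgraph (Kab 2 2) e ->
  exists A : 'M[R]_n, PG e setT A /\
    forall f : R -> R, f 0 = 0 -> f 1 = 1 -> f (-1) = 1 -> f (Num.sqrt 2) < 2 ->
      ~ psd (map_mx f A).
Proof.
move=> [g [ginj hK]].
pose L : seq ('I_2 + 'I_2)%type := [:: inl ord0; inl ord_max; inr ord0; inr ord_max].
pose p (x : 'I_4) := g (nth (inl ord0) L x).
have pinj : injective p.
{ move=> [[|[|[|[|x]]]] hx] [[|[|[|[|y]]]] hy] //= h; try by apply: val_inj.
  all: by move: h; rewrite /p /= => /ginj /eqP. }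
exists (liftm p (M4 R)); split.
  split; first by apply: psd_liftm => //; [exact: M4_sym | exact: M4_psd].
  split => //.
  apply: pat_liftm => x y.
  case: x => [[|[|[|[|x]]]] hx]; case: y => [[|[|[|[|y]]]] hy] //=; rewrite /M4 /= ?eqxx //.
  1-8: by move=> _ _; rewrite /p /=; apply: hK.
move=> f f0 f1 fm1 ft; rewrite map_liftm //.
exact: (notpsd_liftm pinj (M4_neg f0 f1 fm1 ft)).
Qed.


Lemma pow_lt (R : realType) (x a b : R) : 1 < x -> a < b -> powR x a < powR x b.
Proof.
move=> x1 ab; rewrite /powR gt_eqF ?(lt_trans ltr01) // ltr_expR.
by rewrite ltr_pM2r // ln_gt0.
Qed.

Lemma epow_facts (R : realType) (al : R) :
  [/\ epow al 0 = 0, epow al 1 = 1 & epow al 2 = powR 2 al].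
Proof. by rewrite /epow eqxx oner_eq0 pnatr_eq0 /= powR1. Qed.

Lemma phi_facts (R : realType) (al : R) :
  [/\ phi_pow al 0 = 0, phi_pow al 1 = 1, phi_pow al (-1) = 1,
      phi_pow al 2 = powR 2 al & forall x, 0 < x -> phi_pow al x = powR x al].
Proof.
rewrite /phi_pow eqxx oner_eq0 oppr_eq0 oner_eq0 pnatr_eq0 /= normrN normr1 powR1.
split => //; first by rewrite ger0_norm.
by move=> x x0; rewrite gt_eqF // gtr0_norm.
Qed.

Lemma phi_abs (R : realType) (al x : R) : x != 0 -> `|phi_pow al x| = powR `|x| al.
Proof. by move=> /negbTE h; rewrite /phi_pow h ger0_norm ?powR_ge0. Qed.

Lemma psi_facts (R : realType) (al : R) :
  [/\ psi_pow al 0 = 0, psi_pow al 1 = 1,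
      psi_pow al 2 = powR 2 al & forall x, 0 < x -> psi_pow al x = powR x al].
Proof.
rewrite /psi_pow eqxx oner_eq0 pnatr_eq0 /= normr1 powR1 sgr1 mulr1.
split => //; first by rewrite ger0_norm // gtr0_sg // mul1r.
by move=> x x0; rewrite gt_eqF // gtr0_norm // gtr0_sg // mul1r.
Qed.

Lemma psi_abs (R : realType) (al x : R) : x != 0 -> `|psi_pow al x| = powR `|x| al.
Proof.
move=> h; rewrite /psi_pow (negbTE h) normrM normr_sg h mul1r ger0_norm ?powR_ge0 //.
Qed.

Lemma psi_one (R : realType) (x : R) : psi_pow 1 x = x.
Proof.
rewrite /psi_pow; case: eqVneq => [->|h] //.
by rewrite powRr1 ?normr_ge0 // -numEsg.
Qed.

Unset Implicit Arguments.
Set Strict Implicit.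
Theorem theorem4p10 (R : realType) (n : nat) (e : rel 'I_n) :
  simple_graph e -> connected_graph e -> bipartite_graph e -> (3 <= n)%N ->
  [/\ HG e = [set x : R | 1 <= x],
      [set x : R | 2 <= x] `<=` HG_phi e /\ HG_phi e `<=` [set x : R | 1 <= x],
      ([set 1] `|` [set x : R | 3 <= x]) `<=` HG_psi e /\
        HG_psi e `<=` [set x : R | 1 <= x]
    & (exists m : nat, (2 <= m)%N /\ subgraph (Kab 2 2) e /\ subgraph e (Kab 2 m)) ->
      HG_phi e = [set x : R | 2 <= x] /\
      ([set 1] `|` [set x : R | 2 <= x]) `<=` HG_psi e /\
      HG_psi e `<=` [set x : R | 1 <= x]].
Proof.
move=> hsimp hconn [s hs] n3.
have [a [b [c [eab ebc ac]]]] := P3_exists hsimp hconn n3.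
have [A3 [hA3 hcex3]] := cex_P3 R hsimp eab ebc ac.
have PG3 : PG e setT A3 by case: hA3 => [h1 [_ h3]]; split => //; split.
have key3 (al : R) (f : R -> R) : f 0 = 0 -> f 1 = 1 -> f 2 = powR 2 al ->
    PG e setT (map_mx f A3) -> 1 <= al.
  move=> f0 f1 f2 [hp _]; rewrite leNgt; apply/negP => al1.
  apply: (hcex3 f f0 f1) => //; rewrite f2 powR_gt0 //=.
  by rewrite -[X in _ < X](@powRr1 _ 2) // pow_lt // ltr1n.
have phiP (al : R) : 2 <= al -> HG_phi e al.
  move=> a2 A hA; have [f0 _ _ _ fp] := phi_facts al.
  exact: (PG2_pos hs a2 f0 fp (@phi_abs R al) hA).
have psiP (al : R) : 2 <= al -> HG_psi e al.
  move=> a2 A hA; have [f0 _ _ fp] := psi_facts al.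
  exact: (PG2_pos hs a2 f0 fp (@psi_abs R al) hA).
have psi1 : HG_psi (R:=R) e 1.
  move=> A hA; have -> : map_mx (psi_pow 1) A = A.
    by apply/matrixP => i j; rewrite mxE psi_one.
  exact: hA.
have phi_le1 : HG_phi e `<=` [set x : R | 1 <= x].
  move=> al hal; have [f0 f1 _ f2 _] := phi_facts al.
  exact: (key3 al _ f0 f1 f2 (hal _ PG3)).
have psi_le1 : HG_psi e `<=` [set x : R | 1 <= x].
  move=> al hal; have [f0 f1 f2 _] := psi_facts al.
  exact: (key3 al _ f0 f1 f2 (hal _ PG3)).
split.
- rewrite eqEsubset; split => al /= hal.
    have [f0 f1 f2] := epow_facts al.
    exact: (key3 al _ f0 f1 f2 (hal _ hA3)).
  by move=> A hA; apply: (HG_pos hs hal hA).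
- by split => // al /= h; apply: phiP.
- split => // al [/= ->|/= h3] //; apply: psiP; lra.
- move=> [m [_ [hK _]]].
  have [A4 [hA4 hc4]] := cex_K22 R hK.
  split; last split => //; last by move=> al [/= ->|/= h2] //; apply: psiP.
  rewrite eqEsubset; split => al /= hal; last exact: phiP.
  rewrite leNgt; apply/negP => al2.
  have [f0 f1 fm1 _ fp] := phi_facts al.
  have [hp _] := hal _ hA4.
  have r1 : 1 < Num.sqrt (2 : R).
    have := sqr_sqrtr (ler0n R 2); have := sqrtr_ge0 (2 : R); nra.
  apply: (hc4 _ f0 f1 fm1) => //.
  rewrite fp ?(lt_trans ltr01) //.
  rewrite -[X in _ < X](sqr_sqrtr (ler0n R 2)) -powR_mulrn ?sqrtr_ge0 //.
  by apply: pow_lt.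
Qed.
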